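(* Fix $i\in[1,n]$ and let $\alpha(i,j)=\max\{\beta(i,j),\gamma(i,j)\}$ for $j\in[i,n]$. Let $j'(i)$ be the smallest index $j\in[i,n]$ with $\gamma(i,j)\le\beta(i,j)$ (it exists since $\gamma(i,n)=0\le\beta(i,n)$). Then the minimum of $\alpha(i,j)$ over $j\in[i,n]$ is attained at $j=j'(i)$ or at $j=j'(i)-1$ (the latter only possible when $j'(i)>i$); that is, $\min_{j\in[i,n]}\alpha(i,j)=\min\{\alpha(i,j):j\in\{j'(i)-1,j'(i)\}\cap[i,n]\}$.
   Context: Let $v_1,\dots,v_n$ be points of a metric space with metric $|\cdot|$ (symmetric, nonnegative, $|v_iv_j|=0$ iff $i=j$, triangle inequality). For $i\le j$ let $d_P(v_i,v_j)=\sum_{k=i}^{j-1}|v_kv_{k+1}|$ and $d_P(v_j,v_i)=d_P(v_i,v_j)$. For $1\le i\le j\le n$: $\beta(i,j)=\max_{k\in[i,j]}\min\{d_P(v_i,v_k),|v_iv_j|+d_P(v_k,v_j)\}$; $\gamma(i,j)=|v_iv_j|+d_P(v_j,v_n)$ if $j<n$ and $\gamma(i,n)=0$. Then $\alpha(i,j)$ equals the maximum over $k\in[i,n]$ of the shortest-path distance from $v_i$ to $v_k$ in the path $v_1\cdots v_n$ augmented with an edge $e(v_i,v_j)$ of length $|v_iv_j|$. *)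

(* Defs.v *)
From Stdlib Require Import Reals Lra Lia Arith.
Open Scope R_scope.

Definition is_metric {T : Type} (d : T -> T -> R) : Prop :=
  (forall x y, d x y = d y x) /\
  (forall x y, 0 <= d x y) /\
  (forall x y, d x y = 0 <-> x = y) /\
  (forall x y z, d x z <= d x y + d y z).

Fixpoint pathsum {T : Type} (d : T -> T -> R) (v : nat -> T) (a m : nat) : R :=
  match m with
  | O => 0
  | S m' => pathsum d v a m' + d (v (a + m')%nat) (v (S (a + m')))
  end.

Definition dP {T : Type} (d : T -> T -> R) (v : nat -> T) (i j : nat) : R :=
  if (i <=? j)%nat then pathsum d v i (j - i) else pathsum d v j (i - j).

Fixpoint maxr (f : nat -> R) (a m : nat) : R :=
  match m with
  | O => f a
  | S m' => Rmax (maxr f a m') (f (a + S m')%nat)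
  end.

Fixpoint minr (f : nat -> R) (a m : nat) : R :=
  match m with
  | O => f a
  | S m' => Rmin (minr f a m') (f (a + S m')%nat)
  end.

Definition beta {T : Type} (d : T -> T -> R) (v : nat -> T) (i j : nat) : R :=
  maxr (fun k => Rmin (dP d v i k) (d (v i) (v j) + dP d v k j)) i (j - i).

Definition gamma {T : Type} (d : T -> T -> R) (v : nat -> T) (n i j : nat) : R :=
  if (j <? n)%nat then d (v i) (v j) + dP d v j n else 0.

Definition alpha {T : Type} (d : T -> T -> R) (v : nat -> T) (n i j : nat) : R :=
  Rmax (beta d v i j) (gamma d v n i j).

(* Main.v *)
Require Import Defs.
From Stdlib Require Import Reals Lra Lia Arith.
Open Scope R_scope.

Lemma minr_le f a m k : (a <= k <= a + m)%nat -> minr f a m <= f k.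
Proof.
  revert k; induction m; intros k Hk; simpl.
  - replace k with a by lia; lra.
  - destruct (Nat.eq_dec k (a + S m)) as [->|Hne].
    + apply Rmin_r.
    + eapply Rle_trans; [apply Rmin_l|]. apply IHm; lia.
Qed.

Lemma minr_ge f a m L : (forall k, (a <= k <= a + m)%nat -> L <= f k) -> L <= minr f a m.
Proof.
  induction m; intros H; simpl.
  - apply H; lia.
  - apply Rmin_glb; [apply IHm; intros; apply H; lia | apply H; lia].
Qed.

Lemma maxr_mono f g a m : (forall k, (a <= k <= a + m)%nat -> f k <= g k) ->
  maxr f a m <= maxr g a m.
Proof.
  induction m; intros H; simpl.
  - apply H; lia.
  - pose proof (IHm ltac:(intros; apply H; lia)). pose proof (H (a + S m)%nat ltac:(lia)).
    unfold Rmax; repeat destruct Rle_dec; lra.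
Qed.

Lemma pathsum_nonneg {T} (d : T -> T -> R) v a m : is_metric d -> 0 <= pathsum d v a m.
Proof.
  intros [_ [Hp _]]. induction m; simpl; [lra|]. specialize (Hp (v (a+m)%nat) (v (S (a+m)))). lra.
Qed.

Lemma pathsum_front {T} (d : T -> T -> R) v a m :
  pathsum d v a (S m) = d (v a) (v (S a)) + pathsum d v (S a) m.
Proof.
  induction m.
  - simpl. rewrite Nat.add_0_r. lra.
  - change (pathsum d v a (S (S m))) with
      (pathsum d v a (S m) + d (v (a + S m)%nat) (v (S (a + S m)))).
    rewrite IHm. simpl. replace (a + S m)%nat with (S (a + m)) by lia. lra.
Qed.

Lemma dP_le {T} (d : T -> T -> R) v k j : (k <= j)%nat -> dP d v k j = pathsum d v k (j - k).
Proof. intros H; unfold dP; destruct (Nat.leb_spec k j); [reflexivity|lia]. Qed.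

Lemma gamma_step {T} (d : T -> T -> R) v n i j : is_metric d -> (j < n)%nat ->
  gamma d v n i (S j) <= gamma d v n i j.
Proof.
  intros Hm Hj. pose proof Hm as [Hs [Hp [_ Ht]]].
  unfold gamma. destruct (Nat.ltb_spec j n); [|lia].
  rewrite !dP_le by lia.
  destruct (Nat.ltb_spec (S j) n).
  - replace (n - j)%nat with (S (n - S j)) by lia. rewrite pathsum_front.
    specialize (Ht (v i) (v j) (v (S j))). lra.
  - pose proof (pathsum_nonneg d v j (n - j) Hm). specialize (Hp (v i) (v j)). lra.
Qed.

Lemma gamma_mono {T} (d : T -> T -> R) v n i j k : is_metric d -> (j <= k <= n)%nat ->
  gamma d v n i k <= gamma d v n i j.
Proof.
  intros Hm Hk. remember (k - j)%nat as t. revert k Hk Heqt. induction t; intros k Hk Ht.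
  - replace k with j by lia; lra.
  - destruct k; [lia|]. eapply Rle_trans; [apply gamma_step; auto; lia|].
    apply IHt; lia.
Qed.

Lemma beta_step {T} (d : T -> T -> R) v i j : is_metric d -> (i <= j)%nat ->
  beta d v i j <= beta d v i (S j).
Proof.
  intros Hm Hij. pose proof Hm as [Hs [Hp [_ Ht]]]. unfold beta.
  replace (S j - i)%nat with (S (j - i)) by lia. simpl.
  eapply Rle_trans; [|apply Rmax_l].
  apply maxr_mono. intros k Hk.
  apply Rmin_glb; [apply Rmin_l|].
  eapply Rle_trans; [apply Rmin_r|].
  rewrite !dP_le by lia. replace (S j - k)%nat with (S (j - k)) by lia. simpl.
  replace (k + (j - k))%nat with j by lia.
  specialize (Ht (v i) (v (S j)) (v j)). rewrite (Hs (v (S j)) (v j)) in Ht. lra.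
Qed.

Lemma beta_mono {T} (d : T -> T -> R) v i j k : is_metric d -> (i <= j <= k)%nat ->
  beta d v i j <= beta d v i k.
Proof.
  intros Hm Hk. remember (k - j)%nat as t. revert k Hk Heqt. induction t; intros k Hk Ht.
  - replace k with j by lia; lra.
  - destruct k; [lia|]. eapply Rle_trans; [|apply beta_step; auto; lia].
    apply IHt; lia.
Qed.

Theorem mainTheorem7 (T : Type) (d : T -> T -> R) (v : nat -> T) (n i j' : nat) :
  is_metric d ->
  (forall a b, (1 <= a <= n)%nat -> (1 <= b <= n)%nat -> v a = v b -> a = b) ->
  (1 <= i <= n)%nat ->
  (* j' is the smallest index in [i,n] with gamma(i,j') <= beta(i,j') *)
  (i <= j' <= n)%nat ->
  gamma d v n i j' <= beta d v i j' ->
  (forall j, (i <= j < j')%nat -> ~ (gamma d v n i j <= beta d v i j)) ->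
  minr (alpha d v n i) i (n - i) =
    (if (i <? j')%nat
     then Rmin (alpha d v n i (j' - 1)) (alpha d v n i j')
     else alpha d v n i j').
Proof.
  intros Hm _ Hi Hj' Hg Hmin.
  set (M := if (i <? j')%nat
     then Rmin (alpha d v n i (j' - 1)) (alpha d v n i j')
     else alpha d v n i j').
  assert (HA : alpha d v n i j' = beta d v i j').
  { unfold alpha. apply Rmax_left. lra. }
  apply Rle_antisym.
  - unfold M. destruct (Nat.ltb_spec i j').
    + apply Rmin_glb; apply minr_le; lia.
    + apply minr_le; lia.
  - apply minr_ge. intros k Hk. unfold M.
    destruct (Nat.ltb_spec k j') as [Hkj|Hkj].
    + destruct (Nat.ltb_spec i j'); [|lia].
      eapply Rle_trans; [apply Rmin_l|].
      assert (Hn := Hmin (j' - 1)%nat ltac:(lia)).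
      assert (E : alpha d v n i (j' - 1) = gamma d v n i (j' - 1)).
      { unfold alpha. apply Rmax_right. lra. }
      rewrite E. unfold alpha. eapply Rle_trans; [|apply Rmax_r].
      apply gamma_mono; auto; lia.
    + assert (Hb : alpha d v n i j' <= alpha d v n i k).
      { rewrite HA. unfold alpha. eapply Rle_trans; [|apply Rmax_l].
        apply beta_mono; auto; lia. }
      destruct (Nat.ltb_spec i j').
      * eapply Rle_trans; [apply Rmin_r|exact Hb].
      * exact Hb.
Qed.
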